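(* Let $q$ be a power of an odd prime with $q\equiv1\pmod4$, and let $k$ be a divisor of $q-1$ with $(q-1)/k$ even. If $(q,k)$ gives a $3$-design, then $(q^n,k)$ gives a $3$-design for every odd positive integer $n$.
   Context: For a prime power $Q\equiv1\pmod 4$ the group $\mathrm{PSL}(2,Q)$ acts on $\mathrm{PG}(1,Q)=\mathbb{F}_Q\cup\{\infty\}$ by linear fractional transformations $z\mapsto (az+b)/(cz+d)$ with $ad-bc$ a nonzero square in $\mathbb{F}_Q$. For a divisor $k$ of $Q-1$, ''$(Q,k)$ gives a $3$-design'' means that the $\mathrm{PSL}(2,Q)$-orbit of the unique subgroup of order $k$ of $\mathbb{F}_Q^\times$ is the block set of a $3$-$(Q+1,k,\lambda)$ design for some positive integer $\lambda$. *)

(* Defs.v *)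
From mathcomp Require Import all_boot all_algebra.
Set Implicit Arguments. Unset Strict Implicit. Unset Printing Implicit Defensive.
Import GRing.Theory.
Local Open Scope ring_scope.

(* Projective line PG(1,F) = F ∪ {∞}, encoded as [option F] with None = ∞. *)
Definition PG1 (F : finFieldType) := option F.

(* A quadruple (a,b,c,d) represents z |-> (a z + b)/(c z + d); it is an
   element of PSL(2,F) (modulo scalars) iff ad - bc is a nonzero square. *)
Definition is_psl (F : finFieldType) (g : F * F * F * F) : bool :=
  let: (a, b, c, d) := g in
  (a * d - b * c != 0) && [exists y : F, y ^+ 2 == a * d - b * c].

Definition lfrac (F : finFieldType) (g : F * F * F * F) (z : option F) : option F :=
  let: (a, b, c, d) := g in
  match z with
  | Some x => if c * x + d == 0 then None else Some ((a * x + b) / (c * x + d))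
  | None => if c == 0 then None else Some (a / c)
  end.

(* The subgroup of order k of F^x (for k | #|F| - 1): the k-th roots of unity,
   viewed as a subset of PG(1,F). *)
Definition base_block (F : finFieldType) (k : nat) : {set option F} :=
  [set z : option F | if z is Some x then x ^+ k == 1 else false].

Definition psl_orbit (F : finFieldType) (k : nat) : {set {set option F}} :=
  [set [set lfrac g z | z in base_block F k] | g : F * F * F * F & is_psl g].

Definition is_3design (P : finType) (k : nat) (D : {set {set P}}) : Prop :=
  (forall B, B \in D -> #|B| = k) /\
  exists lam : nat, (0 < lam)%N /\
    forall T : {set P}, #|T| = 3%N ->
      #|[set B in D | T \subset B]| = lam.

Definition gives_3design (F : finFieldType) (k : nat) : Prop :=
  is_3design k (psl_orbit F k).

(* Main.v *)
From HB Require Import structures.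
Require Import Defs.
From mathcomp Require Import all_boot all_algebra.
From mathcomp Require Import all_field all_fingroup all_solvable.
From mathcomp Require Import ring.
From Stdlib Require Import Classical.
Set Implicit Arguments. Unset Strict Implicit. Unset Printing Implicit Defensive.
Import GRing.Theory.

Module Aux.
Local Open Scope ring_scope.

Section FF.
Variable L : finFieldType.

Definition issq (x : L) := [exists y : L, y ^+ 2 == x].

Lemma unit_pow (x : L) : x != 0 -> x ^+ #|L|.-1 = 1.
Proof.
move=> nz; have := expf_card x.
rewrite -(ltn_predK (finNzRing_gt1 L)) exprS => h.
by apply: (mulfI nz); rewrite mulr1.
Qed.

Lemma card_gt1 : (1 < #|L|)%N. Proof. exact: finNzRing_gt1. Qed.

Lemma prim_exists : {w : L | (#|L|.-1).-primitive_root w}.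
Proof.
pose rs := enum (predC1 (0 : L)).
have : has (#|L|.-1).-primitive_root rs.
  apply: has_prim_root.
  - by rewrite -ltnS (ltn_predK card_gt1) card_gt1.
  - apply/allP => x; rewrite mem_enum /= => nz.
    by rewrite unity_rootE unit_pow.
  - exact: enum_uniq.
  - by rewrite -cardE cardC1.
by case/hasP/sig2W => w _ pw; exists w.
Qed.


Hypothesis oddL : odd #|L|.
Let h := (#|L|.-1)./2.

Lemma h_double : h.*2 = #|L|.-1.
Proof.
have := odd_double_half #|L|.-1.
have : ~~ odd #|L|.-1.
  by move: oddL card_gt1; case: #|L| => // n; rewrite /= negbK.
by move/negbTE => ->.
Qed.

Lemma h_gt0 : (0 < h)%N.
Proof.
have := h_double; have := card_gt1; move: oddL.
case: #|L| => // [[|[|n]]] //= _ _; case: h => //.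
Qed.

Lemma h_lt : (h < #|L|.-1)%N.
Proof. by rewrite -h_double -addnn -{1}[h]addn0 ltn_add2l h_gt0. Qed.

Lemma chi_sq (x : L) : x != 0 -> (x ^+ h) ^+ 2 = 1.
Proof. by move=> nz; rewrite -exprM mulnC mul2n h_double unit_pow. Qed.

Lemma sq1 (z : L) : z ^+ 2 = 1 -> z = 1 \/ z = -1.
Proof.
move=> /eqP; rewrite -subr_eq0 subr_sqr_1 mulf_eq0 subr_eq0 addr_eq0.
by case/orP => /eqP; [left|right].
Qed.

Lemma prim_nz (w : L) : (#|L|.-1).-primitive_root w -> w != 0.
Proof.
move=> pw; apply/negP => /eqP w0; move: (prim_expr_order pw).
by rewrite w0 expr0n; case: (#|L|.-1) (prim_order_gt0 pw) => // n _ /eqP; rewrite eq_sym oner_eq0.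
Qed.

Lemma prim_h (w : L) : (#|L|.-1).-primitive_root w -> w ^+ h != 1.
Proof.
move=> pw; rewrite -(prim_order_dvd pw).
by apply/negP => /(dvdn_leq h_gt0); rewrite leqNgt h_lt.
Qed.

Lemma m1_neq1 : (-1 : L) != 1.
Proof.
case: prim_exists => w pw.
have := prim_h pw.
by case: (sq1 (chi_sq (prim_nz pw))) => ->; rewrite ?eqxx.
Qed.

Lemma chi_pm (x : L) : x != 0 -> x ^+ h = 1 \/ x ^+ h = -1.
Proof. by move=> nz; apply: sq1; apply: chi_sq. Qed.

Lemma issq_chi (x : L) : x != 0 -> issq x = (x ^+ h == 1).
Proof.
move=> nz; apply/existsP/eqP.
  case=> y /eqP yx; rewrite -yx -exprM mul2n h_double unit_pow //.
  by move: nz; rewrite -yx expf_eq0.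
case: prim_exists => w pw e.
have [[i /= _] xi] := prim_rootP pw (unit_pow nz).
move: e; rewrite xi -exprM => /eqP; rewrite -(prim_order_dvd pw) -h_double.
rewrite -mul2n dvdn_pmul2r ?h_gt0 // => /dvdnP [j ij].
by exists (w ^+ j); rewrite -exprM -ij.
Qed.

Lemma issqM (x y : L) : x != 0 -> y != 0 -> issq (x * y) = (issq x == issq y).
Proof.
move=> nx ny; rewrite !issq_chi ?mulf_neq0 // exprMn.
case: (chi_pm nx) => ->; case: (chi_pm ny) => ->;
  by rewrite ?mul1r ?mulr1 ?mulrNN ?mulr1 ?eqxx ?(negbTE m1_neq1).
Qed.

Lemma exists_nonsq : exists nu : L, (nu != 0) && ~~ issq nu.
Proof.
case: prim_exists => w pw.
by exists w; rewrite prim_nz //= issq_chi ?prim_nz // prim_h.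
Qed.

Definition mu (k : nat) := [set x : L | x ^+ k == 1].

Lemma card_mu k : (k %| #|L|.-1)%N -> #|mu k| = k.
Proof.
move=> kd.
have kpos : (0 < k)%N.
  by case: k kd => //; rewrite dvd0n; case: #|L| card_gt1 => // [] // n; case: n.
apply/eqP; rewrite eqn_leq; apply/andP; split.
  rewrite cardE; apply: max_unity_roots => //; last exact: enum_uniq.
  by apply/allP => x; rewrite mem_enum inE unity_rootE.
case: prim_exists => w pw.
have pz := dvdn_prim_root pw kd.
set z := w ^+ _ in pz.
have inj : injective (fun i : 'I_k => z ^+ i).
  move=> i j /eqP; rewrite (eq_prim_root_expr pz) !modn_small ?ltn_ord //.
  by move/eqP/val_inj.
rewrite -[k in (k <= _)%N]card_ord -(card_imset _ inj).
apply: subset_leq_card; apply/subsetP => _ /imsetP [i _ ->].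
by rewrite inE -exprM mulnC exprM (prim_expr_order pz) expr1n.
Qed.

End FF.

Local Open Scope ring_scope.

Section Act.
Variable L : finFieldType.
Implicit Types g h : L * L * L * L.

Definition det4 g : L := let: (a, b, c, d) := g in a * d - b * c.
Definition mul4 g h : L * L * L * L :=
  let: (a, b, c, d) := g in let: (a', b', c', d') := h in
  (a * a' + b * c', a * b' + b * d', c * a' + d * c', c * b' + d * d').
Definition adj4 g : L * L * L * L := let: (a, b, c, d) := g in (d, - b, - c, a).
Definition scal4 (l : L) g : L * L * L * L :=
  let: (a, b, c, d) := g in (l * a, l * b, l * c, l * d).

Lemma lfrac_mul g h z : det4 g != 0 -> det4 h != 0 ->
  lfrac (mul4 g h) z = lfrac g (lfrac h z).
Proof.
case: g => [[[a b] c] d]; case: h => [[[a' b'] c'] d'] /= dg dh.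
case: z => [x|] /=.
  have [e|ne] := eqVneq (c' * x + d') 0.
    have E1 : (c * a' + d * c') * x + (c * b' + d * d') = c * (a' * x + b').
      by rewrite -[RHS]addr0 -(mulr0 d) -e; ring.
    have E2 : (a * a' + b * c') * x + (a * b' + b * d') = a * (a' * x + b').
      by rewrite -[RHS]addr0 -(mulr0 b) -e; ring.
    have nz : a' * x + b' != 0.
      apply: contra dh => /eqP e2.
      have -> : a' * d' - b' * c' = a' * (c' * x + d') - c' * (a' * x + b') by ring.
      by rewrite e e2 !mulr0 subrr.
    rewrite E1 E2 mulf_eq0 (negbTE nz) orbF.
    case: ifP => // c0; congr Some; field.
    by rewrite nz c0.
  rewrite /=.
  set y := (a' * x + b') / (c' * x + d').
  have E1 : (c * a' + d * c') * x + (c * b' + d * d') = (c * y + d) * (c' * x + d').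
    by rewrite /y; field.
  have E2 : (a * a' + b * c') * x + (a * b' + b * d') = (a * y + b) * (c' * x + d').
    by rewrite /y; field.
  rewrite E1 E2 mulf_eq0 (negbTE ne) orbF.
  case: ifP => // c0; congr Some; field.
  by rewrite ne c0.
have [e|ne] := eqVneq c' 0.
  rewrite e !mulr0 !addr0.
  have na : a' != 0 by apply: contra dh => /eqP ->; rewrite e mul0r mulr0 subrr.
  rewrite mulf_eq0 (negbTE na) orbF.
  case: ifP => // c0; congr Some; field.
  by rewrite na c0.

have E1 : c * a' + d * c' = (c * (a' / c') + d) * c' by field.
have E2 : a * a' + b * c' = (a * (a' / c') + b) * c' by field.
rewrite E1 E2 mulf_eq0 (negbTE ne) orbF.
case: ifP => // c0; congr Some; field.
by rewrite ne E1 mulf_eq0 c0 (negbTE ne).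
Qed.


Definition id4 : L * L * L * L := (1, 0, 0, 1).

Lemma det4_mul g h : det4 (mul4 g h) = det4 g * det4 h.
Proof. case: g => [[[a b] c] d]; case: h => [[[a' b'] c'] d'] /=; ring. Qed.

Lemma det4_adj g : det4 (adj4 g) = det4 g.
Proof. case: g => [[[a b] c] d] /=; ring. Qed.

Lemma det4_scal l g : det4 (scal4 l g) = l ^+ 2 * det4 g.
Proof. case: g => [[[a b] c] d] /=; ring. Qed.

Lemma is_pslE g : is_psl g = (det4 g != 0) && issq (det4 g).
Proof. by case: g => [[[a b] c] d]. Qed.

Lemma lfrac_scal l g z : l != 0 -> lfrac (scal4 l g) z = lfrac g z.
Proof.
case: g => [[[a b] c] d] /= nl; case: z => [x|] /=.
  have -> : l * c * x + l * d = l * (c * x + d) by ring.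
  rewrite mulf_eq0 (negbTE nl) /=; case: ifP => // _; congr Some.
  rewrite -mulrA -mulrDr invfM mulrACA divff ?mul1r //.
rewrite mulf_eq0 (negbTE nl) /=; case: ifP => // c0; congr Some.
by rewrite invfM mulrACA divff ?mul1r.
Qed.

Lemma lfrac_id z : lfrac id4 z = z.
Proof.
case: z => [x|] /=; rewrite /id4 /= ?eqxx //.
by rewrite mul0r add0r oner_eq0 mul1r addr0 divr1.
Qed.

Lemma mul4_adjl g : mul4 (adj4 g) g = scal4 (det4 g) id4.
Proof. case: g => [[[a b] c] d] /=; congr (_, _, _, _); ring. Qed.

Lemma mul4_adjr g : mul4 g (adj4 g) = scal4 (det4 g) id4.
Proof. case: g => [[[a b] c] d] /=; congr (_, _, _, _); ring. Qed.

Lemma lfrac_adjK g : det4 g != 0 -> cancel (lfrac g) (lfrac (adj4 g)).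
Proof.
move=> dg z; rewrite -lfrac_mul ?det4_adj // mul4_adjl lfrac_scal //.
exact: lfrac_id.
Qed.

Lemma lfrac_Kadj g : det4 g != 0 -> cancel (lfrac (adj4 g)) (lfrac g).
Proof.
move=> dg z; rewrite -lfrac_mul ?det4_adj // mul4_adjr lfrac_scal //.
exact: lfrac_id.
Qed.

Lemma lfrac_inj g : det4 g != 0 -> injective (lfrac g).
Proof. by move=> dg; apply: can_inj (lfrac_adjK dg). Qed.

Lemma mul4_adjA h g : mul4 (adj4 h) (mul4 h g) = scal4 (det4 h) g.
Proof.
case: g => [[[a b] c] d]; case: h => [[[a' b'] c'] d'] /=; congr (_, _, _, _); ring.
Qed.

Lemma mul4_Aadj h g : mul4 h (mul4 (adj4 h) g) = scal4 (det4 h) g.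
Proof.
case: g => [[[a b] c] d]; case: h => [[[a' b'] c'] d'] /=; congr (_, _, _, _); ring.
Qed.

Lemma scal4_inj l : l != 0 -> injective (scal4 l).
Proof.
move=> nl [[[a b] c] d] [[[a' b'] c'] d'] /= [] e1 e2 e3 e4.
by rewrite (mulfI nl e1) (mulfI nl e2) (mulfI nl e3) (mulfI nl e4).
Qed.


Definition trip := (option L * option L * option L)%type.
Definition dist3 (t : trip) := [&& t.1.1 != t.1.2, t.1.1 != t.2 & t.1.2 != t.2].

Definition stdz (t : trip) : L * L * L * L :=
  match t with
  | (None, Some b, Some c) => (1, - b, 0, c - b)
  | (Some a, None, Some c) => (0, c - a, 1, - a)
  | (Some a, Some b, None) => (1, - b, 1, - a)
  | (Some a, Some b, Some c) => (c - a, - b * (c - a), c - b, - a * (c - b))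
  | _ => id4
  end.

Lemma ne_sub (a b : L) : Some a != Some b -> b - a != 0.
Proof. by move=> ab; rewrite subr_eq0; apply: contra ab => /eqP ->. Qed.

Lemma stdz_ok t : dist3 t ->
  [/\ det4 (stdz t) != 0, lfrac (stdz t) t.1.1 = None,
      lfrac (stdz t) t.1.2 = Some 0 & lfrac (stdz t) t.2 = Some 1].
Proof.
case: t => [[[a|] [b|]] [c|]] //=; rewrite /dist3 /=.
- case/and3P => ab ac bc.
  have ab' := ne_sub ab; have ac' := ne_sub ac; have bc' := ne_sub bc.
  have -> : (c - a) * (- a * (c - b)) - - b * (c - a) * (c - b) = (c - a) * (c - b) * (b - a) by ring.
  rewrite !mulf_neq0 //.
  have -> : (c - b) * a + - a * (c - b) = 0 by ring.
  rewrite eqxx; split => //.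
    have -> : (c - b) * b + - a * (c - b) = (c - b) * (b - a) by ring.
    have -> : (c - a) * b + - b * (c - a) = 0 by ring.
    by rewrite mulf_eq0 (negbTE bc') (negbTE ab') mul0r.
  have -> : (c - b) * c + - a * (c - b) = (c - b) * (c - a) by ring.
  have -> : (c - a) * c + - b * (c - a) = (c - b) * (c - a) by ring.
  by rewrite mulf_eq0 (negbTE bc') (negbTE ac') divff // mulf_neq0.
- rewrite andbT => ab; have ab' := ne_sub ab.
  have -> : 1 * - a - - b * 1 = b - a by ring.
  by rewrite ab' !mul1r subrr eqxx (negbTE ab') subrr mul0r oner_eq0 invr1.
- rewrite andbT => ac; have ac' := ne_sub ac.
  have -> : 0 * - a - (c - a) * 1 = - (c - a) by ring.
  by rewrite oppr_eq0 ac' !mul1r subrr eqxx oner_eq0 !mul0r add0r (negbTE ac') divff.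
- move=> bc; have bc' := ne_sub bc.
  have -> : 1 * (c - b) - - b * 0 = c - b by ring.
  by rewrite bc' eqxx !mul0r !add0r !mul1r (negbTE bc') subrr mul0r divff.
Qed.

Lemma fix_std h : det4 h != 0 -> lfrac h None = None -> lfrac h (Some 0) = Some 0 ->
  lfrac h (Some 1) = Some 1 -> exists2 l, l != 0 & h = scal4 l id4.
Proof.
case: h => [[[a b] c] d] /= dh.
case: eqP => // c0 _; rewrite c0 mul0r !add0r in dh *.
case: eqP => // d0 [] /eqP; rewrite mulr0 add0r mulf_eq0 invr_eq0 (negbTE (introN eqP d0)) orbF.
move/eqP => b0; rewrite b0 addr0 mulr1; case: ifP => // _ [] /eqP.
rewrite add0r mulr1 => /eqP ad; have {}ad : a = d by rewrite -(divfK (introN eqP d0) a) ad mul1r.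
by exists d; [apply/eqP | rewrite ad !mulr0 mulr1].
Qed.


Lemma big_id4 A B g :
  mul4 (adj4 A) (mul4 (mul4 A (mul4 g (adj4 B))) B) = scal4 (det4 A * det4 B) g.
Proof.
case: g => [[[a b] c] d]; case: A => [[[a' b'] c'] d'];
case: B => [[[a2 b2] c2] d2] /=; congr (_, _, _, _); ring.
Qed.

Lemma mul4_scal_id X Y m : mul4 X (mul4 (scal4 m id4) Y) = scal4 m (mul4 X Y).
Proof.
case: X => [[[a b] c] d]; case: Y => [[[a' b'] c'] d'] /=; congr (_, _, _, _); ring.
Qed.

Lemma scal4A a b g : scal4 a (scal4 b g) = scal4 (a * b) g.
Proof. case: g => [[[x y] z] w] /=; congr (_, _, _, _); ring. Qed.

Lemma scal41 g : scal4 1 g = g.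
Proof. case: g => [[[x y] z] w] /=; congr (_, _, _, _); ring. Qed.

Lemma mul4_adj_scal P l : mul4 (adj4 P) (scal4 l P) = scal4 (l * det4 P) id4.
Proof. case: P => [[[x y] z] w] /=; congr (_, _, _, _); ring. Qed.

Definition tau t := issq (det4 (stdz t)).
Definition maps g (t s : trip) :=
  [&& lfrac g t.1.1 == s.1.1, lfrac g t.1.2 == s.1.2 & lfrac g t.2 == s.2].

Lemma maps_char t s g : dist3 t -> dist3 s -> det4 g != 0 ->
  maps g t s = [exists l, (l != 0) && (g == scal4 l (mul4 (adj4 (stdz s)) (stdz t)))].
Proof.
move=> /stdz_ok [dt t1 t2 t3] /stdz_ok [ds s1 s2 s3] dg.
set As := stdz s in ds s1 s2 s3 *; set At := stdz t in dt t1 t2 t3 *.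
have Pz z : lfrac (mul4 (adj4 As) At) z = lfrac (adj4 As) (lfrac At z).
  by rewrite lfrac_mul ?det4_adj.
apply/idP/idP.
  case/and3P => /eqP g1 /eqP g2 /eqP g3.
  set h := mul4 As (mul4 g (adj4 At)).
  have dh : det4 h != 0 by rewrite !det4_mul det4_adj !mulf_neq0.
  have hz z w : lfrac At w = z -> lfrac h z = lfrac As (lfrac g w).
    move=> <-; rewrite !lfrac_mul ?det4_mul ?det4_adj ?mulf_neq0 //.
    by rewrite lfrac_adjK.
  have h1 : lfrac h None = None by rewrite (hz _ _ t1) g1 s1.
  have h2 : lfrac h (Some 0) = Some 0 by rewrite (hz _ _ t2) g2 s2.
  have h3 : lfrac h (Some 1) = Some 1 by rewrite (hz _ _ t3) g3 s3.
  have [m m0 hm] := fix_std dh h1 h2 h3.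
  have := big_id4 As At g; rewrite -/h hm mul4_scal_id => E.
  have dd : det4 As * det4 At != 0 by rewrite mulf_neq0.
  apply/existsP; exists (m / (det4 As * det4 At)).
  rewrite mulf_neq0 ?invr_eq0 //=.
  by apply/eqP; rewrite mulrC -scal4A E scal4A mulVf // scal41.

case/existsP => l /andP [l0 /eqP ->].
apply/and3P; split; apply/eqP; rewrite lfrac_scal // Pz.
- by rewrite t1 -s1 lfrac_adjK.
- by rewrite t2 -s2 lfrac_adjK.
- by rewrite t3 -s3 lfrac_adjK.
Qed.


Hypothesis oddL : odd #|L|.

Lemma issq_sq (l x : L) : l != 0 -> x != 0 -> issq (l ^+ 2 * x) = issq x.
Proof.
move=> l0 x0; rewrite issqM ?expf_neq0 //.
by have -> : issq (l ^+ 2) by apply/existsP; exists l.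
Qed.

Lemma card_maps t s : dist3 t -> dist3 s ->
  #|[set g | is_psl g && maps g t s]| = if tau t == tau s then #|L|.-1 else 0%N.
Proof.
move=> dt ds.
have [dAt _ _ _] := stdz_ok dt; have [dAs _ _ _] := stdz_ok ds.
set P := mul4 (adj4 (stdz s)) (stdz t).
have dP : det4 P = det4 (stdz s) * det4 (stdz t) by rewrite det4_mul det4_adj.
have dP0 : det4 P != 0 by rewrite dP mulf_neq0.
have key g : (is_psl g && maps g t s) =
    (tau t == tau s) && [exists l, (l != 0) && (g == scal4 l P)].
  rewrite is_pslE.
  case dg: (det4 g != 0) => /=; last first.
    apply/esym/negbTE; apply/negP => /andP [_ /existsP [l /andP [l0 /eqP e]]].
    by move: dg; rewrite e det4_scal mulf_neq0 ?expf_neq0.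
  rewrite maps_char //.
  apply/andP/andP => [[sq /existsP [l /andP [l0 /eqP e]]] | [tt /existsP [l /andP [l0 /eqP e]]]].
    split; last by apply/existsP; exists l; rewrite l0 e eqxx.
    move: sq; rewrite e det4_scal issq_sq // dP issqM //.
    by rewrite eq_sym.
  split; last by apply/existsP; exists l; rewrite l0 e eqxx.
  by rewrite e det4_scal issq_sq // dP issqM // eq_sym.
have inj : {in predC1 0 &, injective (fun l => scal4 l P)}.
  move=> l l' /= l0 l'0 e.
  have := congr1 (fun X => (mul4 (adj4 P) X).1.1.1) e.
  rewrite !mul4_adj_scal /= !mulr1 => /(mulIf dP0).
  by [].
have [e|ne] := eqVneq (tau t) (tau s).
  rewrite -[#|L|.-1](cardC1 (0 : L)) -(card_in_imset inj).
  apply: eq_card => g; rewrite inE key e eqxx /=.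
  apply/existsP/imsetP => [[l /andP [l0 /eqP ->]] | [l l0 ->]]; first by exists l.
  by exists l; rewrite -topredE /= in l0; rewrite l0 eqxx.
apply/eqP; rewrite cards_eq0; apply/eqP/setP => g.
by rewrite inE key (negbTE ne) in_set0.
Qed.

End Act.

Local Open Scope ring_scope.

Arguments id4 {L}.

Lemma card3P (T : finType) (A : {set T}) : #|A| = 3%N ->
  exists x y z, [/\ x != y, x != z, y != z & A = [set x; y; z]].
Proof.
rewrite cardE => sz.
have u := enum_uniq (mem A).
case E: (enum A) sz u => [|x [|y [|z [|w s]]]] //= _.
rewrite !inE !negb_or => /and3P [/andP [xy xz] yz _].
exists x, y, z; split => //; apply/setP => v.
by rewrite -mem_enum E !inE orbA.
Qed.

Lemma inj_card_le (T T' : finType) (A : {set T}) (B : {set T'}) (f : T -> T') :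
  {in A &, injective f} -> (forall x, x \in A -> f x \in B) -> (#|A| <= #|B|)%N.
Proof.
move=> inj fAB; rewrite -(card_in_imset inj); apply: subset_leq_card.
by apply/subsetP => _ /imsetP [x xA ->]; apply: fAB.
Qed.

Section Design.
Variable L : finFieldType.
Hypothesis oddL : odd #|L|.
Variable k : nat.
Hypothesis kd : (k %| #|L|.-1)%N.
Implicit Types g h : L * L * L * L.

Local Notation B0 := (base_block L k).
Definition img g := [set lfrac g z | z in B0].

Lemma B0E : B0 = Some @: mu L k.
Proof.
apply/setP => [[x|]]; rewrite !inE.
  apply/idP/imsetP => [xk | [y yk [->]]]; last by move: yk; rewrite inE.
  by exists x; rewrite ?inE.
by apply/esym/negbTE/negP => /imsetP [].
Qed.

Lemma card_B0 : #|B0| = k.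
Proof. by rewrite B0E card_imset; [apply: card_mu | move=> x y []]. Qed.

Lemma card_img g : det4 g != 0 -> #|img g| = k.
Proof. by move=> dg; rewrite card_imset ?card_B0 //; apply: lfrac_inj. Qed.

Lemma img_mul a g : det4 a != 0 -> det4 g != 0 -> img (mul4 a g) = lfrac a @: img g.
Proof.
move=> da dg; rewrite /img -imset_comp; apply: eq_imset => z /=.
by rewrite lfrac_mul.
Qed.

Lemma img_id : img id4 = B0.
Proof.
rewrite /img; apply/setP => z; apply/imsetP/idP => [[w wB ->]|zB].
  by rewrite lfrac_id.
by exists z; rewrite ?lfrac_id.
Qed.

Lemma mul4_idr g : mul4 g id4 = g.
Proof. by case: g => [[[a b] c] d]; rewrite /id4 /=; congr (_, _, _, _); ring. Qed.

Lemma det4_id : det4 (id4 : L * L * L * L) = 1.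
Proof. by rewrite /det4 /id4 /= mulr1 mulr0 subr0. Qed.

Lemma img_scal l g : l != 0 -> img (scal4 l g) = img g.
Proof. by move=> l0; apply: eq_imset => z; rewrite lfrac_scal. Qed.

Lemma is_psl_mul a g : is_psl a -> is_psl g -> is_psl (mul4 a g).
Proof.
rewrite !is_pslE det4_mul => /andP [da sa] /andP [dg sg].
by rewrite mulf_neq0 //= issqM // sa sg.
Qed.

Lemma is_psl_adj g : is_psl g -> is_psl (adj4 g).
Proof. by rewrite !is_pslE det4_adj. Qed.

Definition sB (B : {set option L}) := #|[set g | is_psl g && (img g == B)]|.

Lemma sB_const h : is_psl h -> sB (img h) = sB B0.
Proof.
move=> ph; have dh : det4 h != 0 by move: ph; rewrite is_pslE => /andP [].
apply/eqP; rewrite eqn_leq; apply/andP; split.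
  apply: (inj_card_le (f := mul4 (adj4 h))).
    move=> g g' _ _ e; apply: (scal4_inj dh).
    by rewrite -!mul4_Aadj e.
  move=> g; rewrite !inE => /andP [pg /eqP ig].
  have dg : det4 g != 0 by move: pg; rewrite is_pslE => /andP [].
  rewrite is_psl_mul ?is_psl_adj //= img_mul ?det4_adj // ig -img_mul ?det4_adj //.
  by rewrite mul4_adjl img_scal // img_id.
apply: (inj_card_le (f := mul4 h)).
  move=> g g' _ _ e; apply: (scal4_inj dh).
  by rewrite -!mul4_adjA e.
move=> g; rewrite !inE => /andP [pg /eqP ig].
have dg : det4 g != 0 by move: pg; rewrite is_pslE => /andP [].
by rewrite is_psl_mul //= img_mul // ig -img_id -img_mul ?mul4_idr // det4_id oner_eq0.
Qed.


Lemma card_fibers (I J : finType) (A : {set I}) (C : {set J}) (f : I -> J) :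
  (forall i, i \in A -> f i \in C) ->
  #|A| = (\sum_(j in C) #|[set i in A | f i == j]|)%N.
Proof.
move=> fAC; rewrite -sum1_card (partition_big f (mem C)) //.
apply: eq_bigr => j _; rewrite -sum1_card; apply: eq_bigl => i.
by rewrite inE.
Qed.

Definition Mset (T : {set option L}) := [set g | is_psl g && (T \subset img g)].
Definition Ncount (T : {set option L}) := #|[set B in psl_orbit L k | T \subset B]|.

Lemma orbitP B : reflect (exists2 g, is_psl g & B = img g) (B \in psl_orbit L k).
Proof.
apply: (iffP imsetP) => [[g] | [g pg ->]]; first by rewrite inE => pg ->; exists g.
by exists g; rewrite ?inE.
Qed.

Lemma NT_s T : (Ncount T * sB B0)%N = #|Mset T|.
Proof.
rewrite (card_fibers (C := [set B in psl_orbit L k | T \subset B]) (f := img)).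
  rewrite /Ncount -sum_nat_const; apply: eq_bigr => B.
  rewrite inE => /andP [/orbitP [h ph ->] TB].
  rewrite -(sB_const ph); apply: eq_card => g; rewrite !inE.
  by case: eqP => [->|]; rewrite ?TB ?andbT ?andbF.

move=> g; rewrite !inE => /andP [pg TB]; rewrite TB andbT.
by apply/orbitP; exists g.
Qed.


Definition Bt3 := [set b : trip L | dist3 b && [&& b.1.1 \in B0, b.1.2 \in B0 & b.2 \in B0]].
Definition cnt e := #|[set b in Bt3 | tau b == e]|.

Lemma M_cnt t : dist3 t ->
  #|Mset [set t.1.1; t.1.2; t.2]| = (#|L|.-1 * cnt (tau t))%N.
Proof.
move=> dt.
pose pre g : trip L := (lfrac (adj4 g) t.1.1, lfrac (adj4 g) t.1.2, lfrac (adj4 g) t.2).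
have dpsl g : is_psl g -> det4 g != 0 by rewrite is_pslE => /andP [].
rewrite (card_fibers (C := Bt3) (f := pre)).
  rewrite (eq_bigr (fun b => if tau b == tau t then #|L|.-1 else 0%N)); last first.
    move=> b bB; rewrite -card_maps //; last by move: bB; rewrite inE => /andP [].
    apply: eq_card => g; rewrite !inE.
    move: bB; rewrite inE => /andP [db /and3P [b1 b2 b3]].
    apply/andP/andP => [[/andP [pg TB] /eqP <-] | [pg /and3P [/eqP g1 /eqP g2 /eqP g3]]].
      split => //; rewrite /maps /= !lfrac_Kadj ?dpsl //.
      by rewrite !eqxx.
    have dg := dpsl _ pg.
    split; first rewrite pg /=.
      apply/subsetP => z; rewrite !inE -g1 -g2 -g3.
      by case/orP => [/orP []|] /eqP ->; apply: imset_f.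
    by rewrite /pre -g1 -g2 -g3 !lfrac_adjK // -!surjective_pairing.
  rewrite -big_mkcondr /= mulnC -sum_nat_const.
  by apply: eq_bigl => b; rewrite !inE.
move=> g; rewrite [_ \in Mset _]inE => /andP [pg TB].
have dg : det4 g != 0 by move: pg; rewrite is_pslE => /andP [].
have inB z : z \in [set t.1.1; t.1.2; t.2] -> lfrac (adj4 g) z \in B0.
  move=> zT; have := subsetP TB z zT; case/imsetP => w wB ->.
  by rewrite lfrac_adjK.
rewrite [_ \in Bt3]inE /= !inB ?inE ?eqxx ?orbT // !andbT.
move: dt; rewrite /dist3 /= !(inj_eq (lfrac_inj _)) ?det4_adj //.
Qed.


Lemma card_trip (t : trip L) : dist3 t -> #|[set t.1.1; t.1.2; t.2]| = 3%N.
Proof.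
case/and3P => a b c; rewrite (@eq_card _ _ (mem [:: t.1.1; t.1.2; t.2])); last by move=> w; rewrite !inE orbA.
by apply/card_uniqP; rewrite /= !inE negb_or a b c.
Qed.

Lemma psl_id : is_psl (id4 : L * L * L * L).
Proof. by rewrite is_pslE det4_id oner_eq0 /=; apply/existsP; exists 1; rewrite expr1n. Qed.

Lemma s0_gt0 : (0 < sB B0)%N.
Proof.
apply/card_gt0P; exists id4; rewrite inE psl_id img_id eqxx.
by [].
Qed.

Lemma NT_formula (T : {set option L}) : #|T| = 3%N -> exists t : trip L,
  [/\ dist3 t, T = [set t.1.1; t.1.2; t.2] &
      (Ncount T * sB B0 = #|L|.-1 * cnt (tau t))%N].
Proof.
case/card3P => x [y [z [xy xz yz ->]]].
exists (x, y, z); split => //; first by apply/and3P.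
rewrite NT_s; have := @M_cnt (x, y, z); rewrite /= => -> //.
by apply/and3P.
Qed.

Let T1 : trip L := (None, Some 0, Some 1).

Lemma T1_ok : dist3 T1 && tau T1.
Proof.
rewrite /dist3 /tau /=; apply/andP; split.
  by apply/negP => /eqP [] /eqP; rewrite eq_sym oner_eq0.
apply/existsP; exists 1.
by rewrite expr1n !subr0 oppr0 mulr0 subr0 mulr1.
Qed.

Lemma T2_ok (nu : L) : nu != 0 -> ~~ issq nu -> dist3 (None, Some 0, Some nu) && ~~ tau (None, Some 0, Some nu).
Proof.
move=> n0 ns; rewrite /dist3 /tau /=; apply/andP; split.
  by apply/negP => /eqP [] /eqP; rewrite eq_sym (negbTE n0).
by rewrite !subr0 oppr0 mulr0 subr0 mul1r.
Qed.

Lemma form (t : trip L) : dist3 t ->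
  (Ncount [set t.1.1; t.1.2; t.2] * sB B0 = #|L|.-1 * cnt (tau t))%N.
Proof. by move=> dt; rewrite NT_s M_cnt. Qed.

Lemma q1_gt0 : (0 < #|L|.-1)%N.
Proof. by rewrite -ltnS (ltn_predK (card_gt1 L)) card_gt1. Qed.

Lemma design_to_cnt : gives_3design L k -> cnt true = cnt false /\ (0 < cnt true)%N.
Proof.
case=> _ [lam [lpos H]].
have [nu /andP [n0 ns]] := exists_nonsq oddL.
have /andP [d1 t1] := T1_ok; have /andP [d2 t2] := T2_ok n0 ns.
have E1 := form d1; have E2 := form d2.
rewrite /Ncount H ?(card_trip d1) // t1 in E1.
rewrite /Ncount H ?(card_trip d2) // (negbTE t2) in E2.
split.
  by apply/eqP; rewrite -(eqn_pmul2l q1_gt0) -E1 -E2.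
by rewrite -(ltn_pmul2l q1_gt0) muln0 -E1 muln_gt0 lpos s0_gt0.
Qed.

Lemma cnt_to_design : cnt true = cnt false -> (0 < cnt true)%N -> gives_3design L k.
Proof.
move=> ceq cpos; split.
  by move=> B /orbitP [g pg ->]; apply: card_img; move: pg; rewrite is_pslE => /andP [].
have /andP [d1 t1] := T1_ok.
have cst e : cnt e = cnt true by case: e.
have E1 := form d1; rewrite t1 in E1.
exists (Ncount [set T1.1.1; T1.1.2; T1.2]); split.
  by rewrite -(ltn_pmul2r s0_gt0) mul0n E1 muln_gt0 q1_gt0 cpos.
move=> T /NT_formula [t [dt -> E]].
apply/eqP; rewrite -(eqn_pmul2r s0_gt0); apply/eqP.
by rewrite /Ncount in E E1; rewrite E E1 cst.
Qed.

End Design.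

Local Open Scope ring_scope.

Section Iota.
Variables (L : finFieldType) (p : nat) (pL : p \in [pchar L]).
Definition iota (c : 'F_p) : L := in_alg (pPrimeCharType pL) c.
Lemma iota_zmod : zmod_morphism iota.
Proof. move=> a b; exact: (rmorphB (in_alg (pPrimeCharType pL))). Qed.
Lemma iota_mon : monoid_morphism iota.
Proof.
split; first exact: (rmorph1 (in_alg (pPrimeCharType pL))).
move=> a b; exact: (rmorphM (in_alg (pPrimeCharType pL))).
Qed.
HB.instance Definition _ := GRing.isZmodMorphism.Build 'F_p L iota iota_zmod.
HB.instance Definition _ := GRing.isMonoidMorphism.Build 'F_p L iota iota_mon.
Definition ev (x : L) (P : {poly 'F_p}) : L := (map_poly iota P).[x].
Lemma evD x P Q : ev x (P + Q) = ev x P + ev x Q.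
Proof. by rewrite /ev rmorphD hornerD. Qed.
Lemma evM x P Q : ev x (P * Q) = ev x P * ev x Q.
Proof. by rewrite /ev rmorphM hornerM. Qed.
Lemma evB x P Q : ev x (P - Q) = ev x P - ev x Q.
Proof. by rewrite /ev rmorphB hornerD hornerN. Qed.
Lemma ev1 x : ev x 1 = 1.
Proof. by rewrite /ev rmorph1 hornerC. Qed.
Lemma ev0 x : ev x 0 = 0.
Proof. by rewrite /ev rmorph0 horner0. Qed.
Lemma evXn x n : ev x 'X^n = x ^+ n.
Proof. by rewrite /ev map_polyXn hornerXn. Qed.
Lemma evC x c : ev x c%:P = iota c.
Proof. by rewrite /ev map_polyC hornerC. Qed.
End Iota.

Section Embed.
Variables (F K : finFieldType) (p : nat) (pF : p \in [pchar F]) (pK : p \in [pchar K]).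
Variable n : nat.
Hypothesis cardK : #|K| = (#|F| ^ n)%N.

Variable w : F.
Hypothesis pw : (#|F|.-1).-primitive_root w.

Local Notation evF := (ev pF w).

Lemma wpow m : w ^+ (#|F| ^ m) = w.
Proof. by elim: m => [|m IH]; rewrite ?expr1 // expnS mulnC exprM IH expf_card. Qed.

Lemma iota_neq0 (L : finFieldType) (pL : p \in [pchar L]) (c : 'F_p) : c != 0 -> iota pL c != 0.
Proof. by rewrite fmorph_eq0. Qed.

Lemma min_ker : exists f, [/\ f != 0, evF f = 0 &
  forall P : {poly 'F_p}, evF P = 0 -> (size P < size f)%N -> P = 0].
Proof.
have ex : exists P, P != 0 /\ evF P = 0.
  exists ('X^(#|F|.-1) - 1%:P); split.
    by rewrite -size_poly_eq0 size_XnsubC // (prim_order_gt0 pw).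
  by rewrite evB evXn evC rmorph1 (prim_expr_order pw) subrr.
suff H N : forall P : {poly 'F_p}, (size P <= N)%N -> P != 0 -> evF P = 0 -> exists f, [/\ f != 0, evF f = 0 &
  forall P : {poly 'F_p}, evF P = 0 -> (size P < size f)%N -> P = 0].
  by case: ex => P [P0 eP]; exact: (H (size P) P (leqnn _) P0 eP).
elim: N => [|N IH] P sP P0 eP.
  by move: P0; rewrite -size_poly_eq0; case: (size P) sP.
case: (classic (exists Q, [/\ evF Q = 0, Q != 0 & (size Q < size P)%N])).
  case=> Q [eQ Q0 sQ]; apply: (IH Q) => //.
  by rewrite -ltnS (leq_trans sQ).
move=> nQ; exists P; split => // Q eQ sQ.
by apply/eqP; apply: contraT => Q0; case: nQ; exists Q.
Qed.


Lemma embed_exists : exists phi : F -> K,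
  [/\ phi 1 = 1, forall x y, phi (x + y) = phi x + phi y & forall x y, phi (x * y) = phi x * phi y].
Proof.
have [f [f0 ef fmin]] := min_ker.
have fdvd P : evF P = 0 -> f %| P.
  move=> eP; apply/modp_eq0P; apply: fmin; last by rewrite ltn_modpN0.
  have := congr1 evF (divp_eq P f); rewrite evD evM ef mulr0 add0r eP.
  by move=> ->.
have fsz : (1 < size f)%N.
  rewrite ltnNge; apply/negP => s1; move: ef; rewrite (size1_polyC s1) evC.
  apply/eqP; apply: iota_neq0; apply: contra f0 => /eqP c0.
  by rewrite (size1_polyC s1) c0.
pose fK := map_poly (iota pK) f.
have : fK %| 'X^#|K| - 'X.
  have : f %| 'X^#|K| - 'X.
    by apply: fdvd; rewrite evB evXn /ev map_polyX hornerX cardK wpow subrr.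
  by rewrite -(dvdp_map (iota pK)) rmorphB /= map_polyXn map_polyX.
rewrite finField_genPoly => /dvdp_prod_XsubC [m Em].
have [u ru] : exists u, root fK u.
  move: Em; case: (mask m _) => [|u s] Em.
    move: (eqp_size Em); rewrite big_nil size_poly1 size_map_poly => e.
    by move: fsz; rewrite e.
  by exists u; rewrite (eqp_root Em) big_cons rootM root_XsubC eqxx.
have kerK P : evF P = 0 -> ev pK u P = 0.
  move=> /fdvd /divpK <-; rewrite evM.
  by move: ru; rewrite /root => /eqP; rewrite /ev -/fK => ->; rewrite mulr0.
pose rep x := if [pick i : 'I_#|F| | w ^+ i == x] is Some i then 'X^i else 0 : {poly 'F_p}.
have evrep x : evF (rep x) = x.
  rewrite /rep; case: pickP => [i /eqP <-|no]; first by rewrite evXn.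
  rewrite ev0; apply/esym/eqP; apply: contraT => x0.
  have [i xi] := prim_rootP pw (unit_pow x0).
  by have := no (widen_ord (leq_pred _) i); rewrite /= xi eqxx.
pose phi x := ev pK u (rep x).
have phiev P : phi (evF P) = ev pK u P.
  apply/eqP; rewrite -subr_eq0 -evB; apply/eqP; apply: kerK.
  by rewrite evB evrep subrr.
exists phi; split.
- by rewrite -(ev1 pF w) phiev ev1.
- by move=> x y; rewrite -{1}(evrep x) -{1}(evrep y) -evD phiev evD.
- by move=> x y; rewrite -{1}(evrep x) -{1}(evrep y) -evM phiev evM.
Qed.

End Embed.

Lemma card_char (L : finFieldType) p (pL : p \in [pchar L]) : #|L| = (p ^ logn p #|L|)%N.
Proof. exact: (card_pprimeChar pL). Qed.

Lemma common_char (F K : finFieldType) n : (0 < n)%N -> #|K| = (#|F| ^ n)%N ->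
  exists p, (p \in [pchar F]) && (p \in [pchar K]).
Proof.
move=> n0 cK.
have [p pp pF] := finPcharP F; have [p' pp' pK] := finPcharP K.
exists p; rewrite pF /=.
suff -> : p = p' by [].
apply/eqP; rewrite -dvdn_prime2 //.
have : (p %| #|K|)%N.
  rewrite cK (card_char pF) -expnM Euclid_dvdX // dvdnn /= muln_gt0 n0 andbT.
  rewrite lt0n; apply/negP => /eqP e.
  by have := card_gt1 F; rewrite (card_char pF) e.
by rewrite (card_char pK) Euclid_dvdX // => /andP [].
Qed.

Local Open Scope ring_scope.

Lemma odd_geom q n : odd q -> odd (\sum_(i < n) q ^ i) = odd n.
Proof.
move=> oq; elim: n => [|n IH]; first by rewrite big_ord0.
by rewrite big_ord_recr /= oddD IH oddX oq orbT /= addbT.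
Qed.

Section Transfer.
Variables (F K : finFieldType) (phi : F -> K).
Hypotheses (phi1 : phi 1 = 1) (phiD : forall x y, phi (x + y) = phi x + phi y)
  (phiM : forall x y, phi (x * y) = phi x * phi y).

Lemma phi0 : phi 0 = 0.
Proof. by apply: (@addrI _ (phi 0)); rewrite -phiD !addr0. Qed.

Lemma phiB : zmod_morphism phi.
Proof.
move=> x y; have := phiD (x - y) y; rewrite subrK => ->.
by rewrite addrK.
Qed.

Lemma phiMon : monoid_morphism phi.
Proof. by split. Qed.

HB.instance Definition _ := GRing.isZmodMorphism.Build F K phi phiB.
HB.instance Definition _ := GRing.isMonoidMorphism.Build F K phi phiMon.

Variable n : nat.
Hypotheses (oddF : odd #|F|) (oddn : odd n) (cardK : #|K| = (#|F| ^ n)%N).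

Lemma oddK : odd #|K|.
Proof. by rewrite cardK oddX oddF orbT. Qed.

Let m := (\sum_(i < n) #|F| ^ i)%N.

Lemma hK : ((#|K|.-1)./2 = (#|F|.-1)./2 * m)%N.
Proof.
rewrite cardK predn_exp -/m.
have := h_double oddF; move: ((#|F|.-1)./2) => a <-.
by rewrite -mul2n -mulnA mul2n doubleK.
Qed.

Lemma issq_phi x : x != 0 -> issq (phi x) = issq x.
Proof.
move=> x0; have px0 : phi x != 0 by rewrite fmorph_eq0.
rewrite (issq_chi oddK px0) (issq_chi oddF x0) hK exprM -rmorphXn.
have om : odd m by rewrite /m odd_geom.
case: (chi_pm oddF x0) => ->; first by rewrite rmorph1 expr1n !eqxx.
rewrite rmorphN rmorph1 -signr_odd om expr1 (negbTE (m1_neq1 oddK)).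
by rewrite (negbTE (m1_neq1 oddF)).
Qed.


Variable k : nat.
Hypotheses (kdF : (k %| #|F|.-1)%N) (kdK : (k %| #|K|.-1)%N).

Lemma B0_phi : base_block K k = omap phi @: base_block F k.
Proof.
apply/eqP; rewrite eq_sym eqEcard; apply/andP; split.
  apply/subsetP => _ /imsetP [[x|] xB ->]; rewrite inE in xB => //.
  by rewrite inE /= -rmorphXn (eqP xB) rmorph1.
rewrite card_B0 // card_in_imset ?card_B0 //.
move=> [x|] [y|] //=; rewrite ?inE // => _ _ [] /(fmorph_inj phi) ->.
by [].
Qed.

Lemma omap_inj : injective (omap phi).
Proof. by move=> [x|] [y|] //= [] /(fmorph_inj phi) ->. Qed.

Definition Phi (b : trip F) : trip K := (omap phi b.1.1, omap phi b.1.2, omap phi b.2).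

Lemma Phi_inj : injective Phi.
Proof.
move=> [[a b] c] [[a' b'] c'] [] /omap_inj -> /omap_inj -> /omap_inj ->.
by [].
Qed.

Lemma dist3_Phi b : dist3 (Phi b) = dist3 b.
Proof. by rewrite /dist3 /= !(inj_eq omap_inj). Qed.

Lemma tau_Phi b : b \in Bt3 F k -> tau (Phi b) = tau b.
Proof.
case: b => [[[a|] [b|]] [c|]]; rewrite inE /= ?inE ?andbF //= => /andP [db _].
have [d0 _ _ _] := stdz_ok db.
rewrite /tau -(issq_phi d0).
by rewrite /= !(rmorphB, rmorphM, rmorphN).
Qed.

Lemma cnt_transfer e : cnt K k e = cnt F k e.
Proof.
rewrite /cnt -(card_imset _ Phi_inj); apply: eq_card => b'.
apply/idP/imsetP.
  rewrite inE => /andP [bB te]; move: bB; rewrite inE => /andP [db /and3P [b1 b2 b3]].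
  rewrite B0_phi in b1 b2 b3.
  case/imsetP: b1 => x1 x1B e1; case/imsetP: b2 => x2 x2B e2; case/imsetP: b3 => x3 x3B e3.
  have Pb : b' = Phi (x1, x2, x3) by rewrite /Phi /= -e1 -e2 -e3; case: b' {db te e1 e2 e3} => [[]].
  have inB : (x1, x2, x3) \in Bt3 F k.
    by rewrite inE /= x1B x2B x3B -dist3_Phi -Pb db.
  exists (x1, x2, x3) => //; rewrite inE inB /= -tau_Phi // -Pb.
  by [].
case=> b; rewrite inE => /andP [bB te] ->.
have bB' := bB; rewrite inE in bB'; case/andP: bB' => db /and3P [b1 b2 b3].
rewrite inE tau_Phi // te andbT inE dist3_Phi db /= B0_phi !imset_f //.
Qed.

End Transfer.

End Aux.
Import Aux.

Theorem proposition3p3 (F : finFieldType) (q k : nat) :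
  #|F| = q -> odd q -> q %% 4 = 1 ->
  k %| q.-1 -> ~~ odd (q.-1 %/ k) ->
  gives_3design F k ->
  forall (n : nat) (K : finFieldType),
    odd n -> #|K| = (q ^ n)%N -> gives_3design K k.
Proof.
move=> cF oq _ kd _ des n K on cK.
have oF : odd #|F| by rewrite cF.
have n0 : (0 < n)%N by move: on; case: (n).
rewrite -cF in cK kd.
have [ceq cpos] := design_to_cnt oF des.
have [p /andP [pF pK]] := common_char n0 cK.
have [w pw] := prim_exists F.
have [phi [phi1 phiD phiM]] := embed_exists pF pK cK pw.
have oK : odd #|K| by rewrite cK oddX oF orbT.
have kdK : (k %| #|K|.-1)%N by rewrite cK predn_exp dvdn_mulr.
have ct := cnt_transfer phi1 phiD phiM oF on cK kd kdK.
apply: (cnt_to_design oK kdK); by rewrite !ct.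
Qed.
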